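(* The function $s \mapsto s\,\dfrac{\theta_4'(s)}{\theta_4(s)}$ is strictly decreasing on $(0,\infty)$.
   Context: For $s>0$, $\theta_4(s) = \sum_{k\in\mathbb{Z}} (-1)^k e^{-\pi k^2 s}$. *)

(* Defs.v *)
From Stdlib Require Import Reals ZArith ClassicalEpsilon.
Open Scope R_scope.

Definition theta4_term (s : R) (k : Z) : R :=
  powerRZ (-1) k * exp (- PI * (IZR k) ^ 2 * s).

Definition theta4_partial (s : R) (N : nat) : R :=
  sum_f_R0 (fun i => theta4_term s (Z.of_nat i - Z.of_nat N)%Z) (2 * N).

(* theta_4(s) = sum_{k in Z} (-1)^k e^{-pi k^2 s}: the limit of the
   symmetric partial sums (the series converges absolutely for s > 0). *)
Definition theta4 (s : R) : R :=
  epsilon (inhabits 0) (fun l => Un_cv (theta4_partial s) l).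

(* Main.v *)
Require Import Defs.
From Stdlib Require Import Reals ZArith ClassicalEpsilon Lra Lia Psatz.
From Coquelicot Require Import Coquelicot.
Open Scope R_scope.
Open Scope R_scope.

Fixpoint prodR (f : nat -> R) (n : nat) : R :=
  match n with O => 1 | S k => prodR f k * f k end.

Lemma prodR_ext f g n : (forall i, (i < n)%nat -> f i = g i) -> prodR f n = prodR g n.
Proof.
  induction n; intros H; simpl; auto.
  rewrite IHn by (intros; apply H; lia). rewrite H by lia. reflexivity.
Qed.

Lemma prodR_shift f n : prodR f (S n) = f O * prodR (fun i => f (S i)) n.
Proof.
  induction n; simpl in *. ring. rewrite IHn. ring.
Qed.

Lemma prodR_add f a b : prodR f (a + b) = prodR f a * prodR (fun i => f (a + i)%nat) b.
Proof.
  induction b; simpl. rewrite Nat.add_0_r; ring.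
  rewrite Nat.add_succ_r; simpl. rewrite IHb. ring.
Qed.

Lemma prodR_rev f n : prodR f n = prodR (fun i => f (n - 1 - i)%nat) n.
Proof.
  induction n. reflexivity.
  rewrite (prodR_shift (fun i => f (S n - 1 - i)%nat)).
  change (prodR f (S n)) with (prodR f n * f n). rewrite IHn.
  replace (S n - 1 - 0)%nat with n by lia. rewrite Rmult_comm. f_equal.
  apply prodR_ext; intros; f_equal; lia.
Qed.

Lemma prodR_mul f g n : prodR (fun i => f i * g i) n = prodR f n * prodR g n.
Proof. induction n; simpl. ring. rewrite IHn; ring. Qed.

Lemma prodR_const c n : prodR (fun _ => c) n = c ^ n.
Proof. induction n; simpl. ring. rewrite IHn; ring. Qed.

Lemma prodR_pow2 q n : prodR (fun j => q ^ (2 * j)) n = q ^ (n * (n - 1)).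
Proof.
  induction n; cbn [prodR]. simpl; ring.
  rewrite IHn, <- pow_add. f_equal. destruct n; simpl; lia.
Qed.

Lemma prodR_pos f n : (forall i, (i < n)%nat -> 0 < f i) -> 0 < prodR f n.
Proof.
  induction n; intros H; simpl. lra. apply Rmult_lt_0_compat; auto.
Qed.

(* q-binomials in base q^2 *)
Fixpoint qb (q : R) (m k : nat) : R :=
  match m, k with
  | _, O => 1
  | O, S _ => 0
  | S m', S k' => qb q m' k' + q ^ (2 * S k') * qb q m' (S k')
  end.

Lemma qb_0 q m : qb q m 0 = 1.
Proof. destruct m; reflexivity. Qed.

Lemma qb_zero q m k : (m < k)%nat -> qb q m k = 0.
Proof.
  revert k; induction m; intros k H; destruct k; try lia; simpl; auto.
  rewrite !IHm by lia. ring.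
Qed.

Lemma tri_eq i : (S i * i = i * (i - 1) + 2 * i)%nat.
Proof. destruct i. reflexivity. rewrite Nat.sub_succ, Nat.sub_0_r. nia. Qed.

Lemma sum_scal_l c (f : nat -> R) n : sum_f_R0 (fun i => c * f i) n = c * sum_f_R0 f n.
Proof. induction n; simpl. ring. rewrite IHn; ring. Qed.

Definition Erothe q m x y :=
  sum_f_R0 (fun i => q ^ (i * (i - 1)) * qb q m i * x ^ i * y ^ (m - i)) m.

Lemma sum_f_R0_ext (f g : nat -> R) n : (forall i, (i <= n)%nat -> f i = g i) ->
  sum_f_R0 f n = sum_f_R0 g n.
Proof.
  induction n; intros H; simpl. apply H; lia.
  rewrite IHn by (intros; apply H; lia). rewrite H by lia. reflexivity.
Qed.

Lemma rothe q m x y :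
  prodR (fun j => y + x * q ^ (2 * j)) m = Erothe q m x y.
Proof.
  revert x; induction m; intros x.
  - unfold Erothe; simpl. ring.
  - rewrite prodR_shift.
    replace (prodR (fun i => y + x * q ^ (2 * S i)) m)
      with (prodR (fun j => y + (x * q ^ 2) * q ^ (2 * j)) m).
    2:{ apply prodR_ext; intros. replace (2 * S i)%nat with (2 + 2 * i)%nat by lia.
        rewrite pow_add. ring. }
    rewrite IHm. simpl (q ^ (2 * 0)). rewrite Rmult_1_r.
    unfold Erothe.
    rewrite (decomp_sum _ (S m)) by lia. simpl pred.
    set (A := fun i => q ^ (i * (i - 1)) * qb q m i * (x * q ^ 2) ^ i * y ^ (m - i)).
    set (B := fun i => q ^ (S i * i) * q ^ (2 * S i) * qb q m (S i) * x ^ S i * y ^ (S m - S i)).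
    rewrite (sum_f_R0_ext (fun i => q ^ (S i * (S i - 1)) * qb q (S m) (S i) * x ^ S i * y ^ (S m - S i))
      (fun i => x * A i + B i)).
    2:{ intros i Hi. unfold A, B.
        change (qb q (S m) (S i)) with (qb q m i + q^(2*S i) * qb q m (S i)). replace (S i - 1)%nat with i by lia.
        rewrite tri_eq.
        rewrite pow_add, Rpow_mult_distr, <- pow_mult. simpl (S m - S i)%nat.
        rewrite <- (tech_pow_Rmult x). ring. }
    rewrite sum_plus, sum_scal_l.
    rewrite Rmult_plus_distr_r.
    replace (q ^ (0 * (0 - 1)) * qb q (S m) 0 * x ^ 0 * y ^ (S m - 0)) with (y ^ S m)
      by (simpl; ring).
    assert (Hy : y * sum_f_R0 A m = y ^ S m + sum_f_R0 B m).
    { unfold A, B. rewrite <- sum_scal_l.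
      rewrite (sum_f_R0_ext (fun i => y * (q ^ (i * (i - 1)) * qb q m i * (x * q ^ 2) ^ i * y ^ (m - i)))
          (fun i => q ^ (i * (i - 1)) * qb q m i * (x * q ^ 2) ^ i * y ^ (S m - i))).
      2:{ intros i Hi. replace (S m - i)%nat with (S (m - i)) by lia.
          rewrite <- (tech_pow_Rmult y). ring. }
      assert (E : sum_f_R0 (fun i => q ^ (i * (i - 1)) * qb q m i * (x * q ^ 2) ^ i * y ^ (S m - i)) m
                = sum_f_R0 (fun i => q ^ (i * (i - 1)) * qb q m i * (x * q ^ 2) ^ i * y ^ (S m - i)) (S m)).
      { rewrite tech5. rewrite (qb_zero q m (S m)) by lia. ring. }
      rewrite E, (decomp_sum _ (S m)) by lia. simpl pred. f_equal.
      - rewrite qb_0, Nat.sub_0_r. simpl. ring.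
      - apply sum_f_R0_ext; intros i Hi.
        replace (S i - 1)%nat with i by lia. rewrite tri_eq.
        rewrite pow_add, Rpow_mult_distr, <- pow_mult.
        rewrite <- (tech_pow_Rmult x).
        replace (2 * S i)%nat with (2 * i + 2)%nat by lia. rewrite pow_add.
        replace (S m - S i)%nat with (m - i)%nat by lia. ring. }
    rewrite Hy. ring.
Qed.
Open Scope R_scope.

Definition dd (i n : nat) : nat := if Nat.leb i n then (n - i)%nat else (i - n)%nat.

Lemma exps N i : (i <= 2 * S N)%nat ->
  (i * (i - 1) + (2 * N + 1) * (2 * S N - i) =
   dd i (S N) * dd i (S N) + (S N * (S N - 1) + (2 * N + 1) * S N))%nat.
Proof.
  intros H. unfold dd. destruct (Nat.leb_spec i (S N)).
  - destruct i. simpl. nia.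
    replace (S i - 1)%nat with i by lia.
    replace (S N - S i)%nat with (N - i)%nat by lia.
    replace (2 * S N - S i)%nat with (2 * N + 1 - i)%nat by lia.
    replace (S N - 1)%nat with N by lia.
    assert (exists d, N = i + d)%nat as [d ->] by (exists (N - i)%nat; lia).
    replace (i + d - i)%nat with d by lia.
    replace (2 * (i + d) + 1 - i)%nat with (i + 2 * d + 1)%nat by lia. nia.
  - assert (exists d, i = S N + S d)%nat as [d ->] by (exists (i - S N - 1)%nat; lia).
    replace (S N + S d - 1)%nat with (N + S d)%nat by lia.
    replace (S N + S d - S N)%nat with (S d) by lia.
    replace (2 * S N - (S N + S d))%nat with (N - d)%nat by lia.
    replace (S N - 1)%nat with N by lia.
    assert (exists e, N = d + e)%nat as [e ->] by (exists (N - d)%nat; lia).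
    replace (d + e - d)%nat with e by lia. nia.
Qed.

Definition poch q m := prodR (fun j => 1 - q ^ (2 * S j)) m.
Definition Oprod q n := prodR (fun i => 1 - q ^ (2 * i + 1)) n.

Lemma poch_S q m : poch q (S m) = poch q m * (1 - q ^ (2 * S m)).
Proof. reflexivity. Qed.

Lemma qb_closed q m k : (k <= m)%nat -> qb q m k * poch q k * poch q (m - k) = poch q m.
Proof.
  revert k; induction m; intros k Hk.
  - replace k with O by lia. simpl. unfold poch; simpl; ring.
  - destruct k.
    + rewrite qb_0. simpl (S m - 0)%nat. unfold poch; simpl; ring.
    + change (qb q (S m) (S k)) with (qb q m k + q^(2*S k) * qb q m (S k)).
      simpl (S m - S k)%nat.
      rewrite (poch_S q k), (poch_S q m).
      destruct (Nat.eq_dec k m) as [->|Hne].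
      * rewrite (qb_zero q m (S m)) by lia. rewrite Nat.sub_diag.
        pose proof (IHm m (le_n m)) as E. rewrite Nat.sub_diag in E.
        transitivity ((qb q m m * poch q m * poch q 0) * (1 - q^(2*S m))). ring.
        rewrite E. ring.
      * pose proof (IHm k ltac:(lia)) as E1.
        pose proof (IHm (S k) ltac:(lia)) as E2.
        set (r := (m - S k)%nat) in *.
        replace (m - k)%nat with (S r) in * by (unfold r; lia).
        rewrite poch_S in E1. rewrite poch_S in E2.
        replace (2 * S m)%nat with (2 * S k + 2 * S r)%nat by (unfold r; lia).
        rewrite pow_add.
        transitivity ((1 - q ^ (2 * S k)) * (qb q m k * poch q k * (poch q r * (1 - q ^ (2 * S r))))
            + q ^ (2 * S k) * (1 - q ^ (2 * S r)) * (qb q m (S k) * (poch q k * (1 - q ^ (2 * S k))) * poch q r)).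
        rewrite (poch_S q r). ring. rewrite E1, E2. ring.
Qed.

Lemma prod_identity q N :
  prodR (fun j => q ^ (2 * N + 1) + (-1) * q ^ (2 * j)) (2 * S N) =
  (-1) ^ S N * q ^ (S N * (S N - 1) + (2 * N + 1) * S N) * Oprod q (S N) * Oprod q (S N).
Proof.
  replace (2 * S N)%nat with (S N + S N)%nat by lia.
  rewrite prodR_add.
  rewrite (prodR_ext (fun i => q ^ (2 * N + 1) + -1 * q ^ (2 * (S N + i)))
     (fun i => q ^ (2 * N + 1) * (1 - q ^ (2 * i + 1)))).
  2:{ intros i Hi. replace (2 * (S N + i))%nat with (2 * N + 1 + (2 * i + 1))%nat by lia.
      rewrite (pow_add q (2 * N + 1) (2 * i + 1)). ring. }
  rewrite prodR_mul, prodR_const.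
  rewrite prodR_rev.
  rewrite (prodR_ext (fun i => q ^ (2 * N + 1) + -1 * q ^ (2 * (S N - 1 - i)))
     (fun i => (-1) * q ^ (2 * (N - i)) * (1 - q ^ (2 * i + 1)))).
  2:{ intros i Hi. replace (S N - 1 - i)%nat with (N - i)%nat by lia.
      replace (2 * N + 1)%nat with (2 * (N - i) + (2 * i + 1))%nat by lia.
      rewrite (pow_add q (2 * (N - i)) (2 * i + 1)). ring. }
  rewrite !prodR_mul, prodR_const.
  rewrite (prodR_rev (fun i => q ^ (2 * (N - i)))).
  rewrite (prodR_ext (fun i => q ^ (2 * (N - (S N - 1 - i)))) (fun i => q ^ (2 * i))).
  2:{ intros i Hi. f_equal. lia. }
  rewrite prodR_pow2. unfold Oprod. rewrite (pow_add q (S N * (S N - 1))), (pow_mult q (2 * N + 1) (S N)). ring.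
Qed.

Lemma gauss_finite q N : 0 < q ->
  sum_f_R0 (fun i => (-1) ^ i * q ^ (dd i (S N) * dd i (S N)) * qb q (2 * S N) i) (2 * S N)
  = (-1) ^ S N * Oprod q (S N) * Oprod q (S N).
Proof.
  intros Hq.
  pose proof (rothe q (2 * S N) (-1) (q ^ (2 * N + 1))) as R.
  rewrite prod_identity in R. unfold Erothe in R.
  set (c := (S N * (S N - 1) + (2 * N + 1) * S N)%nat) in *.
  rewrite (sum_f_R0_ext _ (fun i => q ^ c * ((-1) ^ i * q ^ (dd i (S N) * dd i (S N)) * qb q (2 * S N) i))) in R.
  2:{ intros i Hi. rewrite <- pow_mult.
      transitivity ((-1) ^ i * q ^ (i * (i - 1) + (2 * N + 1) * (2 * S N - i)) * qb q (2 * S N) i).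
      rewrite pow_add. ring.
      unfold c. rewrite exps by lia. rewrite !pow_add. ring. }
  rewrite sum_scal_l in R.
  assert (0 < q ^ c) by (apply pow_lt; lra).
  apply (Rmult_eq_reg_l (q ^ c)); [|lra]. rewrite <- R. ring.
Qed.
Open Scope R_scope.

Lemma pow_le_one q n : 0 <= q <= 1 -> q ^ n <= 1.
Proof. intros H. rewrite <- (pow1 n). apply pow_incr. lra. Qed.

Lemma pow_decr q k m : 0 <= q <= 1 -> (k <= m)%nat -> q ^ m <= q ^ k.
Proof.
  intros H Hkm. replace m with (k + (m - k))%nat by lia. rewrite pow_add.
  pose proof (pow_le q k ltac:(lra)). pose proof (pow_le_one q (m - k) H).
  pose proof (pow_le q (m-k) ltac:(lra)). nra.
Qed.

Section Q.
Variable q : R.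
Hypothesis Hq0 : 0 < q.
Hypothesis Hq1 : q < 1.

Lemma q2_lt1 : q ^ 2 < 1.
Proof. simpl. nra. Qed.

Lemma fac_pos m : (0 < m)%nat -> 0 < 1 - q ^ m.
Proof.
  intros Hm. destruct m. lia.
  assert (q ^ S m <= q ^ 1) by (apply pow_decr; lra || lia). simpl in *. lra.
Qed.

Lemma poch_pos m : 0 < poch q m.
Proof. apply prodR_pos. intros. apply fac_pos. lia. Qed.

Lemma poch_le k d : poch q (k + d) <= poch q k.
Proof.
  induction d. rewrite Nat.add_0_r; lra.
  rewrite Nat.add_succ_r, poch_S.
  pose proof (poch_pos (k + d)). pose proof (pow_le q (2 * S (k + d)) ltac:(lra)). nra.
Qed.

Lemma poch_ge_aux k d :
  poch q k * (1 - q ^ (2 * S k) * (1 - q ^ (2 * d)) / (1 - q ^ 2)) <= poch q (k + d).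
Proof.
  pose proof q2_lt1 as H2.
  induction d.
  - rewrite Nat.add_0_r. simpl (q ^ (2 * 0)). replace (1 - 1) with 0 by ring.
    unfold Rdiv. rewrite Rmult_0_r, Rmult_0_l, Rminus_0_r. lra.
  - rewrite Nat.add_succ_r, poch_S.
    set (A := q ^ (2 * S k) * (1 - q ^ (2 * d)) / (1 - q ^ 2)) in *.
    set (r := q ^ (2 * S (k + d))).
    assert (HA : q ^ (2 * S k) * (1 - q ^ (2 * S d)) / (1 - q ^ 2) = A + r).
    { unfold A, r. replace (2 * S (k + d))%nat with (2 * S k + 2 * d)%nat by lia.
      replace (2 * S d)%nat with (2 * d + 2)%nat by lia. rewrite !pow_add.
      field. lra. }
    rewrite HA.
    assert (0 <= A).
    { unfold A. apply Rmult_le_pos. apply Rmult_le_pos. apply pow_le; lra.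
      assert (q ^ (2 * d) <= 1) by (apply pow_le_one; lra). lra.
      apply Rlt_le, Rinv_0_lt_compat. lra. }
    assert (0 <= r <= 1) by (split; [apply pow_le; lra| apply pow_le_one; lra]).
    pose proof (poch_pos k).
    assert (1 - r >= 0) by lra.
    assert (0 <= poch q k * A * r) by (apply Rmult_le_pos; [apply Rmult_le_pos|]; lra).
    apply Rle_trans with (poch q k * (1 - A) * (1 - r)). nra.
    apply Rmult_le_compat_r; lra.
Qed.

Definition eps k := q ^ (2 * S k) / (1 - q ^ 2).

Lemma eps_pos k : 0 <= eps k.
Proof.
  unfold eps. pose proof q2_lt1. apply Rmult_le_pos. apply pow_le; lra.
  apply Rlt_le, Rinv_0_lt_compat. lra.
Qed.

Lemma eps_decr k m : (k <= m)%nat -> eps m <= eps k.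
Proof.
  intros H. unfold eps. pose proof q2_lt1. apply Rmult_le_compat_r.
  apply Rlt_le, Rinv_0_lt_compat. lra. apply pow_decr; lra || lia.
Qed.

Lemma poch_ge k d : poch q k * (1 - eps k) <= poch q (k + d).
Proof.
  eapply Rle_trans; [|apply poch_ge_aux]. apply Rmult_le_compat_l.
  pose proof (poch_pos k); lra. unfold eps.
  assert (0 <= q ^ (2 * S k) * q ^ (2 * d) / (1 - q ^ 2)).
  { pose proof q2_lt1. apply Rmult_le_pos. apply Rmult_le_pos; apply pow_le; lra.
    apply Rlt_le, Rinv_0_lt_compat. lra. }
  unfold Rdiv in *. nra.
Qed.

Lemma w_bound a n w : (a <= n)%nat ->
  w * poch q a * poch q (2 * n - a) = poch q n * poch q (2 * n) ->
  Rabs (w - 1) <= 2 * eps a.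
Proof.
  intros Ha Hw.
  pose proof (poch_pos a) as Pa. pose proof (poch_pos (2 * n - a)) as Pb.
  pose proof (poch_pos n) as Pn. pose proof (poch_pos (2 * n)) as P2n.
  set (al := poch q n / poch q a). set (be := poch q (2 * n) / poch q (2 * n - a)).
  assert (Hwab : w = al * be).
  { unfold al, be.
    assert (E : w = (w * poch q a * poch q (2 * n - a)) / (poch q a * poch q (2 * n - a)))
      by (field; lra).
    rewrite E, Hw. field; lra. }
  pose proof (poch_le a (n - a)) as L1. replace (a + (n - a))%nat with n in L1 by lia.
  pose proof (poch_ge a (n - a)) as G1. replace (a + (n - a))%nat with n in G1 by lia.
  pose proof (poch_le (2 * n - a) a) as L2. replace (2 * n - a + a)%nat with (2 * n)%nat in L2 by lia.
  pose proof (poch_ge (2 * n - a) a) as G2. replace (2 * n - a + a)%nat with (2 * n)%nat in G2 by lia.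
  pose proof (eps_decr a (2 * n - a) ltac:(lia)) as Ed.
  pose proof (eps_pos a).
  assert (Hal : 1 - eps a <= al <= 1).
  { unfold al. split. apply (Rmult_le_reg_r (poch q a)); auto. field_simplify; lra.
    apply (Rmult_le_reg_r (poch q a)); auto. field_simplify; lra. }
  assert (Hbe : 1 - eps a <= be <= 1).
  { unfold be. split. apply (Rmult_le_reg_r (poch q (2 * n - a))); auto. field_simplify; nra.
    apply (Rmult_le_reg_r (poch q (2 * n - a))); auto. field_simplify; lra. }
  assert (0 <= al) by (unfold al; apply Rlt_le, Rdiv_lt_0_compat; auto).
  rewrite Hwab. rewrite Rabs_left1 by nra. nra.
Qed.


Definition Gf n := poch q n * Oprod q n * Oprod q n.
Definition Sp n := sum_f_R0 (fun i => (-1) ^ n * (-1) ^ i * q ^ (dd i n * dd i n)) (2 * n).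

Lemma diff_expr N : Gf (S N) - Sp (S N) =
  sum_f_R0 (fun i => (-1) ^ S N * (-1) ^ i * q ^ (dd i (S N) * dd i (S N)) *
                     (poch q (S N) * qb q (2 * S N) i - 1)) (2 * S N).
Proof.
  rewrite (sum_f_R0_ext _ (fun i => ((-1) ^ S N * poch q (S N)) * ((-1) ^ i * q ^ (dd i (S N) * dd i (S N)) * qb q (2 * S N) i)
      - (-1) ^ S N * (-1) ^ i * q ^ (dd i (S N) * dd i (S N)))).
  2:{ intros; ring. }
  rewrite minus_sum, sum_scal_l, gauss_finite by lra. unfold Gf, Sp.
  replace ((-1) ^ S N * poch q (S N) * ((-1) ^ S N * Oprod q (S N) * Oprod q (S N)))
   with (((-1) ^ S N * (-1) ^ S N) * (poch q (S N) * Oprod q (S N) * Oprod q (S N))) by ring.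
  rewrite <- pow_add. replace (S N + S N)%nat with (2 * S N)%nat by lia.
  rewrite pow_1_even. ring.
Qed.

Lemma term_bound n i : (i <= 2 * n)%nat ->
  Rabs ((-1) ^ n * (-1) ^ i * q ^ (dd i n * dd i n) * (poch q n * qb q (2 * n) i - 1))
  <= 2 * (q ^ (2 * n + 1) / (1 - q ^ 2)).
Proof.
  intros Hi.
  set (d := dd i n). set (a := (n - d)%nat).
  assert (Hd : (d <= n)%nat /\ (i = a \/ i = 2 * n - a)%nat).
  { unfold a, d, dd. destruct (Nat.leb_spec i n); lia. }
  assert (Hw : (poch q n * qb q (2 * n) i) * poch q a * poch q (2 * n - a) = poch q n * poch q (2 * n)).
  { destruct Hd as [_ [Ei | Ei]]; rewrite Ei.
    - rewrite <- (qb_closed q (2 * n) a) by lia. ring.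
    - rewrite <- (qb_closed q (2 * n) (2 * n - a)) by lia.
      replace (2 * n - (2 * n - a))%nat with a by lia. ring. }
  pose proof (w_bound a n _ ltac:(lia) Hw) as Wb.
  rewrite !Rabs_mult, !pow_1_abs, (Rabs_right (q ^ _)) by (apply Rle_ge, pow_le; lra).
  unfold eps in Wb.
  assert (Hexp : q ^ (d * d) * q ^ (2 * S a) <= q ^ (2 * n + 1)).
  { rewrite <- pow_add. apply pow_decr. lra. unfold a. destruct Hd as [Hdn _].
    clear -Hdn. revert Hdn. generalize d n. clear. intros d n Hdn.
    assert (exists e, n = d + e)%nat as [e ->] by (exists (n - d)%nat; lia).
    replace (d + e - d)%nat with e by lia. destruct d. lia. nia. }
  pose proof (pow_le q (d * d) ltac:(lra)).
  pose proof q2_lt1.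
  assert (0 < / (1 - q ^ 2)) by (apply Rinv_0_lt_compat; lra).
  unfold Rdiv in *.
  apply Rle_trans with (q ^ (d * d) * (2 * (q ^ (2 * S a) * / (1 - q ^ 2)))).
  rewrite !Rmult_1_l. apply Rmult_le_compat_l; auto.
  replace (q ^ (d * d) * (2 * (q ^ (2 * S a) * / (1 - q ^ 2)))) with
    (2 * / (1 - q ^ 2) * (q ^ (d * d) * q ^ (2 * S a))) by ring.
  replace (2 * (q ^ (2 * n + 1) * / (1 - q ^ 2))) with (2 * / (1 - q ^ 2) * q ^ (2 * n + 1)) by ring.
  apply Rmult_le_compat_l; lra.
Qed.

Lemma diff_bound N : Rabs (Gf (S N) - Sp (S N)) <=
  INR (S (2 * S N)) * (2 * (q ^ (2 * S N + 1) / (1 - q ^ 2))).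
Proof.
  rewrite diff_expr. eapply Rle_trans. apply Rsum_abs.
  rewrite Rmult_comm, <- sum_cte. apply sum_Rle. intros i Hi. apply term_bound. lia.
Qed.

End Q.
Open Scope R_scope.

Lemma exp_pow_INR x m : exp x ^ m = exp (INR m * x).
Proof.
  induction m. simpl. rewrite Rmult_0_l, exp_0. reflexivity.
  rewrite <- tech_pow_Rmult, IHm, <- exp_plus, S_INR. f_equal. ring.
Qed.

Lemma powerRZ_m1 k : powerRZ (-1) k = (-1) ^ (Z.abs_nat k).
Proof.
  destruct k; simpl. reflexivity.
  - reflexivity.
  - replace (/ (-1) ^ Pos.to_nat p) with ((/ -1) ^ Pos.to_nat p) by (rewrite pow_inv; reflexivity).
    replace (/ -1) with (-1) by field. reflexivity.
Qed.

Lemma absnat_dd i n : Z.abs_nat (Z.of_nat i - Z.of_nat n) = dd i n.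
Proof. unfold dd. destruct (Nat.leb_spec i n); lia. Qed.

Lemma m1_dd i n : (-1) ^ (dd i n) = (-1) ^ n * (-1) ^ i.
Proof.
  rewrite <- pow_add. unfold dd. destruct (Nat.leb_spec i n).
  - replace (n + i)%nat with ((n - i) + 2 * i)%nat by lia.
    rewrite pow_add, pow_1_even. ring.
  - replace (n + i)%nat with ((i - n) + 2 * n)%nat by lia.
    rewrite pow_add, pow_1_even. ring.
Qed.

Lemma theta4_term_dd s i n :
  theta4_term s (Z.of_nat i - Z.of_nat n) =
  (-1) ^ n * (-1) ^ i * exp (- PI * s) ^ (dd i n * dd i n).
Proof.
  unfold theta4_term. rewrite powerRZ_m1, absnat_dd, m1_dd. f_equal.
  rewrite exp_pow_INR. f_equal.
  rewrite mult_INR, <- absnat_dd.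
  rewrite !INR_IZR_INZ, Nat2Z.inj_abs_nat.
  replace (IZR (Z.abs (Z.of_nat i - Z.of_nat n)) * IZR (Z.abs (Z.of_nat i - Z.of_nat n)))
    with (IZR (Z.of_nat i - Z.of_nat n) ^ 2).
  ring.
  rewrite <- mult_IZR. simpl. rewrite Rmult_1_r, <- mult_IZR. f_equal.
  rewrite <- Z.abs_mul. rewrite Z.abs_eq by apply Z.square_nonneg. ring.
Qed.

Lemma theta4_partial_Sp s n : theta4_partial s n = Sp (exp (- PI * s)) n.
Proof.
  unfold theta4_partial, Sp. apply sum_f_R0_ext. intros. apply theta4_term_dd.
Qed.

Definition acoef (m : nat) : R :=
  if Nat.eqb (Nat.sqrt m * Nat.sqrt m) m
  then (if Nat.eqb m 0 then 1 else 2 * (-1) ^ Nat.sqrt m) else 0.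

Lemma acoef_sq k : acoef (S k * S k) = 2 * (-1) ^ (S k).
Proof.
  unfold acoef. rewrite Nat.sqrt_square, Nat.eqb_refl. reflexivity.
Qed.

Lemma acoef_nonsq n j : (j < 2 * n)%nat -> acoef (S (n * n) + j) = 0.
Proof.
  intros H. unfold acoef. rewrite (Nat.sqrt_unique _ n) by nia.
  destruct (Nat.eqb_spec (n * n) (S (n * n) + j)). lia. reflexivity.
Qed.

Lemma sum_only_last (f : nat -> R) m : (forall j, (j < m)%nat -> f j = 0) -> sum_f_R0 f m = f m.
Proof.
  induction m; intros H. reflexivity.
  simpl. rewrite IHm by (intros; apply H; lia). rewrite H by lia. ring.
Qed.

Lemma T_rec x n : sum_f_R0 (fun m => acoef m * x ^ m) (S n * S n) =
  sum_f_R0 (fun m => acoef m * x ^ m) (n * n) + 2 * (-1) ^ (S n) * x ^ (S n * S n).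
Proof.
  rewrite (tech2 _ (n * n) (S n * S n)) by nia. f_equal.
  replace (S n * S n - S (n * n))%nat with (2 * n)%nat by nia.
  rewrite sum_only_last.
  - replace (S (n * n) + 2 * n)%nat with (S n * S n)%nat by nia. rewrite acoef_sq. ring.
  - intros j Hj. rewrite acoef_nonsq by lia. ring.
Qed.

Lemma theta4_partial_rec s n : theta4_partial s (S n) =
  theta4_partial s n + 2 * (-1) ^ (S n) * exp (- PI * s) ^ (S n * S n).
Proof.
  unfold theta4_partial.
  rewrite (decomp_sum _ (2 * S n)) by lia.
  replace (pred (2 * S n)) with (S (2 * n)) by lia.
  rewrite tech5.
  rewrite (sum_f_R0_ext (fun i => theta4_term s (Z.of_nat (S i) - Z.of_nat (S n)))
     (fun i => theta4_term s (Z.of_nat i - Z.of_nat n))).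
  2:{ intros; f_equal; lia. }
  replace (Z.of_nat (S (S (2 * n))) - Z.of_nat (S n))%Z
     with (Z.of_nat (2 * S n) - Z.of_nat (S n))%Z by lia.
  rewrite !theta4_term_dd.
  replace (dd 0 (S n)) with (S n) by (unfold dd; simpl; lia).
  replace (dd (2 * S n) (S n)) with (S n).
  2:{ unfold dd. destruct (Nat.leb_spec (2 * S n) (S n)); lia. }
  rewrite pow_1_even. simpl pow at 2. ring.
Qed.

Lemma T_theta s n : sum_f_R0 (fun m => acoef m * exp (- PI * s) ^ m) (n * n) = theta4_partial s n.
Proof.
  induction n.
  - simpl. unfold theta4_partial. simpl. unfold theta4_term. simpl.
    unfold acoef. simpl. replace (- PI * (0 * (0 * 1)) * s) with 0 by ring. rewrite exp_0. ring.
  - rewrite T_rec, theta4_partial_rec, IHn. reflexivity.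
Qed.

Lemma acoef_bound m : Rabs (acoef m) <= 2.
Proof.
  unfold acoef. destruct (Nat.eqb _ m); [destruct (Nat.eqb m 0)|].
  - rewrite Rabs_R1. lra.
  - rewrite Rabs_mult, pow_1_abs, Rabs_right by lra. lra.
  - rewrite Rabs_R0. lra.
Qed.

Lemma radius_ok x : 0 <= x < 1 -> Rbar_lt (Rabs x) (CV_radius acoef).
Proof.
  intros Hx. rewrite Rabs_right by lra.
  pose proof (CV_radius_bounded acoef) as [Hub _].
  apply Rbar_lt_le_trans with (Finite ((1 + x) / 2)).
  simpl. lra.
  apply Hub. exists 2. intros n. rewrite Rabs_mult.
  rewrite (Rabs_right (((1 + x) / 2) ^ n)).
  2:{ apply Rle_ge, pow_le. lra. }
  pose proof (acoef_bound n).
  assert (((1 + x) / 2) ^ n <= 1) by (apply pow_le_one; lra).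
  pose proof (pow_le ((1 + x) / 2) n ltac:(lra)).
  pose proof (Rabs_pos (acoef n)). nra.
Qed.

Lemma qpos s : 0 <= exp (- PI * s).
Proof. apply Rlt_le, exp_pos. Qed.

Lemma qlt1 s : 0 < s -> exp (- PI * s) < 1.
Proof.
  intros Hs. rewrite <- exp_0. apply exp_increasing. pose proof PI_RGT_0. nra.
Qed.

Lemma theta4_cv s : 0 < s ->
  Un_cv (theta4_partial s) (PSeries acoef (exp (- PI * s))) /\
  theta4 s = PSeries acoef (exp (- PI * s)).
Proof.
  intros Hs. set (x := exp (- PI * s)).
  assert (Hr : Rbar_lt (Rabs x) (CV_radius acoef))
    by (apply radius_ok; split; [apply qpos| apply qlt1; auto]).
  pose proof (PSeries_correct _ _ (CV_radius_inside _ _ Hr)) as P.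
  apply is_pseries_Reals in P. unfold Pser, infinite_sum in P.
  assert (H : Un_cv (theta4_partial s) (PSeries acoef x)).
  { intros e He. destruct (P e He) as [N HN]. exists N. intros n Hn.
    rewrite <- T_theta. apply HN. nia. }
  split; auto.
  unfold theta4.
  assert (Ex : exists l, Un_cv (theta4_partial s) l) by (exists (PSeries acoef x); auto).
  pose proof (epsilon_spec (inhabits 0) _ Ex) as Sp.
  eapply UL_sequence; eauto.
Qed.

Definition theta4d (s : R) : R :=
  PSeries (PS_derive acoef) (exp (- PI * s)) * (exp (- PI * s) * (- PI)).

Lemma deriv_local (f g : R -> R) x l : 0 < x ->
  (forall y, 0 < y -> g y = f y) -> derivable_pt_lim f x l -> derivable_pt_lim g x l.
Proof.
  intros Hx Heq D e He. destruct (D e He) as [d Hd].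
  assert (Hm : 0 < Rmin d x) by (apply Rmin_pos; [apply cond_pos| auto]).
  exists (mkposreal _ Hm). intros h Hh Hhd. simpl in Hhd.
  pose proof (Rmin_l d x). pose proof (Rmin_r d x).
  assert (0 < x + h) by (apply Rabs_def2 in Hhd; lra).
  rewrite !Heq by lra. apply Hd; auto. lra.
Qed.

Lemma theta4_deriv s : 0 < s -> derivable_pt_lim theta4 s (theta4d s).
Proof.
  intros Hs.
  apply deriv_local with (f := fun y => PSeries acoef (exp (- PI * y))); auto.
  { intros y Hy. apply theta4_cv; auto. }
  unfold theta4d.
  assert (D1 : derivable_pt_lim (fun y => exp (- PI * y)) s (exp (- PI * s) * (- PI))).
  { apply is_derive_Reals. auto_derive. auto. ring. }
  assert (D2 : derivable_pt_lim (PSeries acoef) (exp (- PI * s))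
                 (PSeries (PS_derive acoef) (exp (- PI * s)))).
  { apply is_derive_Reals. apply is_derive_PSeries. apply radius_ok.
    split; [apply qpos| apply qlt1; auto]. }
  exact (derivable_pt_lim_comp _ _ _ _ _ D1 D2).
Qed.
Open Scope R_scope.

Lemma bern h m : 0 <= h -> 1 + INR m * h <= (1 + h) ^ m.
Proof.
  intros Hh. induction m. simpl; lra.
  rewrite S_INR. simpl pow. pose proof (pos_INR m).
  assert (0 <= INR m * h * h) by (apply Rmult_le_pos; [apply Rmult_le_pos|]; lra). nra.
Qed.

Lemma mqm_bound q m : 0 < q < 1 ->
  INR m * q ^ m <= sqrt q ^ m / (/ sqrt q - 1).
Proof.
  intros Hq. set (r := sqrt q).
  assert (Hr0 : 0 < r) by (apply sqrt_lt_R0; lra).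
  assert (Hrr : r * r = q) by (apply sqrt_sqrt; lra).
  assert (Hr1 : r < 1).
  { destruct (Rlt_or_le r 1); auto. nra. }
  set (h := / r - 1).
  assert (Hh : 0 < h).
  { unfold h. assert (1 < / r). { rewrite <- Rinv_1. apply Rinv_lt_contravar; lra. } lra. }
  pose proof (bern h m ltac:(lra)) as Bn.
  assert (E : (1 + h) ^ m * r ^ m = 1).
  { rewrite <- Rpow_mult_distr. unfold h. replace ((1 + (/ r - 1)) * r) with 1 by (field; lra).
    apply pow1. }
  assert (Hrm : 0 < r ^ m) by (apply pow_lt; lra).
  assert (H1 : INR m * h * r ^ m <= 1).
  { apply Rle_trans with ((1 + h) ^ m * r ^ m - r ^ m). nra. lra. }
  rewrite <- Hrr, Rpow_mult_distr.
  fold h. apply (Rmult_le_reg_r h); auto.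
  replace (r ^ m / h * h) with (r ^ m) by (field; lra).
  pose proof (pos_INR m). nra.
Qed.

Lemma cv_small (x : nat -> R) C r : 0 <= r < 1 -> 0 < C ->
  (forall N, Rabs (x N) <= C * r ^ N) -> Un_cv x 0.
Proof.
  intros Hr HC Hx e He.
  destruct (pow_lt_1_zero r ltac:(rewrite Rabs_right; lra) (e / C) ltac:(apply Rdiv_lt_0_compat; lra))
    as [N HN].
  exists N. intros n Hn. unfold R_dist. rewrite Rminus_0_r.
  eapply Rle_lt_trans. apply Hx.
  specialize (HN n Hn). rewrite Rabs_right in HN by (apply Rle_ge, pow_le; lra).
  apply (Rmult_lt_compat_l C) in HN; auto.
  replace (C * (e / C)) with e in HN by (field; lra). lra.
Qed.

Lemma G_cv s : 0 < s -> Un_cv (fun N => Gf (exp (- PI * s)) (S N)) (theta4 s).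
Proof.
  intros Hs. set (q := exp (- PI * s)).
  assert (Hq : 0 < q < 1) by (split; [apply exp_pos| apply qlt1; auto]).
  destruct (theta4_cv s Hs) as [Hcv Heq]. rewrite <- Heq in Hcv.
  set (r := sqrt q).
  assert (Hr0 : 0 < r) by (apply sqrt_lt_R0; lra).
  assert (Hrr : r * r = q) by (apply sqrt_sqrt; lra).
  assert (Hr1 : r < 1) by (destruct (Rlt_or_le r 1); auto; nra).
  assert (Hh : 0 < / r - 1).
  { assert (1 < / r). { rewrite <- Rinv_1. apply Rinv_lt_contravar; lra. } lra. }
  assert (Hq2 : 0 < 1 - q ^ 2) by (simpl; nra).
  assert (Hsum : Un_cv (fun N => Sp q (S N) + (Gf q (S N) - Sp q (S N))) (theta4 s + 0)).
  2:{ rewrite Rplus_0_r in Hsum. intros e He. destruct (Hsum e He) as [N HN]. exists N.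
      intros n Hn. specialize (HN n Hn). simpl in HN.
      replace (Gf q (S n)) with (Sp q (S n) + (Gf q (S n) - Sp q (S n))) by ring. exact HN. }
  apply (CV_plus (fun N => Sp q (S N)) (fun N => Gf q (S N) - Sp q (S N))).
  - intros e He. destruct (Hcv e He) as [N HN]. exists N. intros n Hn.
    unfold q. rewrite <- theta4_partial_Sp. apply HN. lia.
  - apply cv_small with (C := 2 / ((1 - q ^ 2) * (/ r - 1))) (r := r).
    lra. apply Rdiv_lt_0_compat. lra. apply Rmult_lt_0_compat; lra.
    intros N. eapply Rle_trans. apply diff_bound; lra.
    pose proof (mqm_bound q (S (2 * S N)) Hq) as M. fold r in M.
    replace (2 * S N + 1)%nat with (S (2 * S N)) by lia.
    assert (r ^ S (2 * S N) <= r ^ N) by (apply pow_decr; lra || lia).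
    apply Rle_trans with (2 / (1 - q ^ 2) * (r ^ S (2 * S N) / (/ r - 1))).
    + replace (INR (S (2 * S N)) * (2 * (q ^ S (2 * S N) / (1 - q ^ 2))))
        with (2 / (1 - q ^ 2) * (INR (S (2 * S N)) * q ^ S (2 * S N))) by (field; lra).
      apply Rmult_le_compat_l; auto. apply Rlt_le, Rdiv_lt_0_compat; lra.
    + replace (2 / ((1 - q ^ 2) * (/ r - 1)) * r ^ N) with
        (2 / (1 - q ^ 2) * (r ^ N / (/ r - 1))) by (field; lra).
      apply Rmult_le_compat_l. apply Rlt_le, Rdiv_lt_0_compat; lra.
      unfold Rdiv. apply Rmult_le_compat_r; auto. apply Rlt_le, Rinv_0_lt_compat; lra.
Qed.

Lemma fac_exp q x : 0 < q < 1 -> 0 <= x <= q -> exp (- (x / (1 - q))) <= 1 - x.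
Proof.
  intros Hq Hx. set (y := x / (1 - q)).
  assert (Hy : 0 <= y) by (unfold y; apply Rmult_le_pos; [lra| apply Rlt_le, Rinv_0_lt_compat; lra]).
  pose proof (exp_ineq1_le y).
  rewrite exp_Ropp.
  assert (Hm : 1 <= (1 - x) * (1 + y)).
  { unfold y. replace ((1 - x) * (1 + x / (1 - q))) with (1 + x * (q - x) / (1 - q)) by (field; lra).
    assert (0 <= x * (q - x) / (1 - q)).
    { apply Rmult_le_pos. apply Rmult_le_pos; lra. apply Rlt_le, Rinv_0_lt_compat; lra. }
    lra. }
  assert (0 < exp y) by apply exp_pos.
  apply (Rmult_le_reg_r (exp y)); auto. rewrite Rinv_l by lra. nra.
Qed.

Lemma prod_lb q (x : nat -> R) n : 0 < q < 1 ->
  (forall j, 0 <= x j <= q ^ (S j)) ->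
  exp (- ((q - q ^ (S n)) / ((1 - q) * (1 - q)))) <= prodR (fun j => 1 - x j) n.
Proof.
  intros Hq Hx. induction n.
  - simpl. replace (- ((q - q * 1) / ((1 - q) * (1 - q)))) with 0 by (field; lra).
    rewrite exp_0. lra.
  - simpl prodR.
    assert (Hqn : q ^ (S n) <= q).
    { pose proof (pow_decr q 1 (S n) ltac:(lra) ltac:(lia)). simpl in *. lra. }
    assert (F : exp (- (q ^ (S n) / (1 - q))) <= 1 - x n).
    { apply Rle_trans with (exp (- (x n / (1 - q)))).
      - destruct (Req_dec (x n) (q ^ S n)) as [E|E]. rewrite E; lra.
        apply Rlt_le, exp_increasing.
        apply Ropp_lt_contravar. unfold Rdiv. apply Rmult_lt_compat_r.
        apply Rinv_0_lt_compat; lra. specialize (Hx n). lra.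
      - apply fac_exp; auto. specialize (Hx n). lra. }
    replace (- ((q - q ^ S (S n)) / ((1 - q) * (1 - q)))) with
      (- ((q - q ^ (S n)) / ((1 - q) * (1 - q))) + - (q ^ (S n) / (1 - q))).
    2:{ rewrite <- (tech_pow_Rmult q (S n)). field. lra. }
    rewrite exp_plus. apply Rmult_le_compat; auto; apply Rlt_le, exp_pos.
Qed.

Lemma prod_lb' q (x : nat -> R) n : 0 < q < 1 ->
  (forall j, 0 <= x j <= q ^ (S j)) ->
  exp (- (q / ((1 - q) * (1 - q)))) <= prodR (fun j => 1 - x j) n.
Proof.
  intros Hq Hx. apply Rle_trans with (exp (- ((q - q ^ (S n)) / ((1 - q) * (1 - q))))).
  2:{ apply prod_lb; auto. }
  destruct (Req_dec (q ^ S n) 0) as [E|E].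
  { rewrite E, Rminus_0_r. lra. }
  apply Rlt_le, exp_increasing. apply Ropp_lt_contravar. unfold Rdiv.
  pose proof (pow_lt q (S n) ltac:(lra)).
  apply Rmult_lt_compat_r. apply Rinv_0_lt_compat. nra. lra.
Qed.

Lemma Gf_lb q n : 0 < q < 1 -> exp (- (q / ((1 - q) * (1 - q)))) ^ 3 <= Gf q n.
Proof.
  intros Hq. unfold Gf, poch, Oprod.
  assert (P1 : exp (- (q / ((1 - q) * (1 - q)))) <= prodR (fun j => 1 - q ^ (2 * S j)) n).
  { apply prod_lb'; auto. intros j. split. apply pow_le; lra. apply pow_decr; lra || lia. }
  assert (P2 : exp (- (q / ((1 - q) * (1 - q)))) <= prodR (fun j => 1 - q ^ (2 * j + 1)) n).
  { apply prod_lb'; auto. intros j. split. apply pow_le; lra. apply pow_decr; lra || lia. }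
  pose proof (exp_pos (- (q / ((1 - q) * (1 - q))))).
  set (c := exp (- (q / ((1 - q) * (1 - q))))) in *.
  set (A := prodR (fun j => 1 - q ^ (2 * S j)) n) in *.
  set (B := prodR (fun j => 1 - q ^ (2 * j + 1)) n) in *.
  replace (c ^ 3) with (c * c * c) by ring.
  apply Rmult_le_compat; [nra|lra| apply Rmult_le_compat; lra | lra].
Qed.

Lemma lim_ge (u : nat -> R) l c : Un_cv u l -> (forall n, c <= u n) -> c <= l.
Proof.
  intros H Hc. destruct (Rle_or_lt c l); auto.
  destruct (H (c - l) ltac:(lra)) as [N HN]. specialize (HN N (le_n N)).
  unfold R_dist in HN. specialize (Hc N). apply Rabs_def2 in HN. lra.
Qed.

Lemma theta4_pos s : 0 < s -> 0 < theta4 s.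
Proof.
  intros Hs. set (q := exp (- PI * s)).
  assert (Hq : 0 < q < 1) by (split; [apply exp_pos| apply qlt1; auto]).
  apply Rlt_le_trans with (exp (- (q / ((1 - q) * (1 - q)))) ^ 3).
  apply pow_lt, exp_pos.
  apply lim_ge with (fun N => Gf q (S N)). apply G_cv; auto.
  intros; apply Gf_lb; auto.
Qed.
Open Scope R_scope.

Definition gfun (y : R) := y * exp (- y) / (1 - exp (- y)).

Lemma exp_neg_lt1 y : 0 < y -> exp (- y) < 1.
Proof. intros. rewrite <- exp_0. apply exp_increasing. lra. Qed.

Lemma gfun_alt y : 0 < y -> gfun y = y / (exp y - 1).
Proof.
  intros Hy. unfold gfun. rewrite exp_Ropp.
  assert (1 < exp y) by (pose proof (exp_ineq1 y ltac:(lra)); lra).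
  field. split; lra.
Qed.

Lemma gfun_decr y1 y2 : 0 < y1 < y2 -> gfun y2 < gfun y1.
Proof.
  intros [H1 H12].
  rewrite !gfun_alt by lra.
  set (A := exp y1). set (d := y2 - y1). set (D := exp d).
  assert (HB : exp y2 = A * D) by (unfold A, D, d; rewrite <- exp_plus; f_equal; ring).
  rewrite HB.
  assert (HD : 1 + d < D) by (apply exp_ineq1; unfold d; lra).
  assert (HA : A * (1 - y1) < 1).
  { pose proof (exp_ineq1 (- y1) ltac:(lra)) as E.
    assert (exp (- y1) * A = 1) by (unfold A; rewrite <- exp_plus; replace (- y1 + y1) with 0 by ring; apply exp_0).
    assert (0 < A) by apply exp_pos. nra. }
  assert (HA1 : 1 < A) by (pose proof (exp_ineq1 y1 ltac:(lra)); unfold A; lra).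
  assert (Hd : 0 < d) by (unfold d; lra).
  assert (HAD : 1 < A * D) by nra.
  apply (Rmult_lt_reg_r ((A * D - 1) * (A - 1))). nra.
  replace (y2 / (A * D - 1) * ((A * D - 1) * (A - 1))) with (y2 * (A - 1)) by (field; lra).
  replace (y1 / (A - 1) * ((A * D - 1) * (A - 1))) with (y1 * (A * D - 1)) by (field; lra).
  replace y2 with (y1 + d) by (unfold d; ring).
  assert (0 < y1 * A) by nra.
  assert (y1 * A * d < y1 * A * (D - 1)) by (apply Rmult_lt_compat_l; lra).
  nra.
Qed.

Definition ell (m : nat) (u : R) := ln (1 - exp (- PI * INR m * exp u)).
Definition dell (m : nat) (u : R) := gfun (PI * INR m * exp u).

Lemma ell_deriv m u : (0 < m)%nat -> derivable_pt_lim (ell m) u (dell m u).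
Proof.
  intros Hm. apply is_derive_Reals. unfold ell, dell, gfun.
  assert (Hc : 0 < PI * INR m * exp u).
  { apply Rmult_lt_0_compat. apply Rmult_lt_0_compat. apply PI_RGT_0. apply lt_0_INR; auto. apply exp_pos. }
  replace (- PI * INR m * exp u) with (- (PI * INR m * exp u)) by ring.
  pose proof (exp_neg_lt1 _ Hc).
  set (c := PI * INR m) in *.
  auto_derive; replace (- PI * INR m * exp u) with (- (c * exp u)) by (unfold c; ring).
  lra. unfold c in *. field. apply Rgt_not_eq. lra.
Qed.

Definition concave3 (F : R -> R) := forall u1 u2 u3, u1 < u2 -> u2 < u3 ->
  (F u3 - F u2) * (u2 - u1) <= (F u2 - F u1) * (u3 - u2).

Lemma dell_decr m u1 u2 : (0 < m)%nat -> u1 < u2 -> dell m u2 < dell m u1.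
Proof.
  intros Hm H. unfold dell. apply gfun_decr.
  assert (0 < PI * INR m) by (apply Rmult_lt_0_compat; [apply PI_RGT_0| apply lt_0_INR; auto]).
  pose proof (exp_pos u1). pose proof (exp_increasing _ _ H). split; nra.
Qed.

Lemma ell_concave m : (0 < m)%nat -> concave3 (ell m).
Proof.
  intros Hm u1 u2 u3 H12 H23.
  destruct (MVT_cor2 (ell m) (dell m) u1 u2 H12) as [c1 [E1 [Hc1 Hc1']]].
  { intros; apply ell_deriv; auto. }
  destruct (MVT_cor2 (ell m) (dell m) u2 u3 H23) as [c2 [E2 [Hc2 Hc2']]].
  { intros; apply ell_deriv; auto. }
  rewrite E1, E2. pose proof (dell_decr m c1 c2 Hm ltac:(lra)).
  assert (0 < (u3 - u2) * (u2 - u1)) by nra. nra.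
Qed.

Lemma concave3_plus F G : concave3 F -> concave3 G -> concave3 (fun u => F u + G u).
Proof. intros HF HG u1 u2 u3 H1 H2. specialize (HF u1 u2 u3 H1 H2). specialize (HG u1 u2 u3 H1 H2). nra. Qed.

Lemma concave3_scal c F : 0 <= c -> concave3 F -> concave3 (fun u => c * F u).
Proof.
  intros Hc HF u1 u2 u3 H1 H2. specialize (HF u1 u2 u3 H1 H2).
  replace ((c * F u3 - c * F u2) * (u2 - u1)) with (c * ((F u3 - F u2) * (u2 - u1))) by ring.
  replace ((c * F u2 - c * F u1) * (u3 - u2)) with (c * ((F u2 - F u1) * (u3 - u2))) by ring.
  apply Rmult_le_compat_l; auto.
Qed.

Fixpoint sumR (f : nat -> R) (n : nat) : R :=
  match n with O => 0 | S k => sumR f k + f k end.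

Lemma concave3_sum (F : nat -> R -> R) n : (forall j, concave3 (F j)) ->
  concave3 (fun u => sumR (fun j => F j u) n).
Proof.
  intros HF. induction n; simpl.
  - intros u1 u2 u3 _ _. lra.
  - apply (concave3_plus (fun u => sumR (fun j => F j u) n) (F n)); auto.
Qed.

Lemma cv_const c : Un_cv (fun _ : nat => c) c.
Proof. intros e He. exists O. intros. unfold R_dist. rewrite Rminus_diag, Rabs_R0. auto. Qed.

Lemma concave3_lim (Fn : nat -> R -> R) F :
  (forall u, Un_cv (fun n => Fn n u) (F u)) -> (forall n, concave3 (Fn n)) -> concave3 F.
Proof.
  intros Hcv HF u1 u2 u3 H1 H2.
  set (a := - (u3 - u2)). set (b := (u3 - u2) + (u2 - u1)). set (c := - (u2 - u1)).
  assert (Hv : Un_cv (fun n => a * Fn n u1 + b * Fn n u2 + c * Fn n u3) (a * F u1 + b * F u2 + c * F u3)).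
  { apply CV_plus. apply CV_plus.
    all: apply CV_mult; [apply cv_const| apply Hcv]. }
  assert (0 <= a * F u1 + b * F u2 + c * F u3).
  { apply (lim_ge _ _ 0 Hv). intros n. specialize (HF n u1 u2 u3 H1 H2).
    unfold a, b, c. nra. }
  unfold a, b, c in *. nra.
Qed.

Lemma concave_deriv F u1 u2 d1 d2 : concave3 F ->
  derivable_pt_lim F u1 d1 -> derivable_pt_lim F u2 d2 -> u1 < u2 -> d2 <= d1.
Proof.
  intros HC D1 D2 H12.
  set (m := (F u2 - F u1) / (u2 - u1)).
  assert (Hm : F u2 - F u1 = m * (u2 - u1)) by (unfold m; field; lra).
  assert (A1 : m <= d1).
  { destruct (Rle_or_lt m d1) as [|Hlt]; auto. exfalso.
    destruct (D1 (m - d1) ltac:(lra)) as [del Hdel].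
    set (h := Rmin (del / 2) ((u2 - u1) / 2)).
    assert (Hh : 0 < h) by (apply Rmin_pos; [pose proof (cond_pos del)|]; lra).
    assert (Hh2 : h <= (u2 - u1) / 2) by apply Rmin_r.
    assert (Hh1 : h <= del / 2) by apply Rmin_l.
    pose proof (cond_pos del).
    specialize (Hdel h ltac:(lra) ltac:(rewrite Rabs_right; lra)).
    apply Rabs_def2 in Hdel. destruct Hdel as [Hd _].
    assert (HA : F (u1 + h) - F u1 < m * h).
    { assert ((F (u1 + h) - F u1) / h < m) by lra.
      apply (Rmult_lt_compat_r h) in H0; auto.
      replace ((F (u1 + h) - F u1) / h * h) with (F (u1 + h) - F u1) in H0 by (field; lra). lra. }
    specialize (HC u1 (u1 + h) u2 ltac:(lra) ltac:(lra)).
    set (A := F (u1 + h) - F u1) in *. set (B := F u2 - F (u1 + h)) in *.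
    assert (HAB : A + B = m * (u2 - u1)) by (unfold A, B; lra).
    replace (u1 + h - u1) with h in HC by ring.
    assert (B * h < m * h * (u2 - (u1 + h))) by nra.
    assert (B < m * (u2 - (u1 + h))).
    { apply (Rmult_lt_reg_r h); auto. nra. }
    nra. }
  assert (A2 : d2 <= m).
  { destruct (Rle_or_lt d2 m) as [|Hlt]; auto. exfalso.
    destruct (D2 (d2 - m) ltac:(lra)) as [del Hdel].
    set (h := Rmin (del / 2) ((u2 - u1) / 2)).
    assert (Hh : 0 < h) by (apply Rmin_pos; [pose proof (cond_pos del)|]; lra).
    assert (Hh2 : h <= (u2 - u1) / 2) by apply Rmin_r.
    assert (Hh1 : h <= del / 2) by apply Rmin_l.
    pose proof (cond_pos del).
    specialize (Hdel (- h) ltac:(lra) ltac:(rewrite Rabs_left; lra)).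
    apply Rabs_def2 in Hdel. destruct Hdel as [_ Hd].
    replace (u2 + - h) with (u2 - h) in Hd by ring.
    assert (HB : m * h < F u2 - F (u2 - h)).
    { assert (m < (F (u2 - h) - F u2) / - h) by lra.
      replace ((F (u2 - h) - F u2) / - h) with ((F u2 - F (u2 - h)) / h) in H0 by (field; lra).
      apply (Rmult_lt_compat_r h) in H0; auto.
      replace ((F u2 - F (u2 - h)) / h * h) with (F u2 - F (u2 - h)) in H0 by (field; lra). lra. }
    specialize (HC u1 (u2 - h) u2 ltac:(lra) ltac:(lra)).
    set (A := F (u2 - h) - F u1) in *. set (B := F u2 - F (u2 - h)) in *.
    assert (HAB : A + B = m * (u2 - u1)) by (unfold A, B; lra).
    replace (u2 - (u2 - h)) with h in HC by ring.
    assert (A < m * (u2 - h - u1)) by lra.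
    assert (A * h < m * (u2 - h - u1) * h) by (apply Rmult_lt_compat_r; auto).
    assert (B * (u2 - h - u1) < m * h * (u2 - h - u1)) by lra.
    assert (B < m * h). { apply (Rmult_lt_reg_r (u2 - h - u1)). lra. lra. }
    lra. }
  lra.
Qed.
Open Scope R_scope.

Lemma ln_prod f n : (forall j, (j < n)%nat -> 0 < f j) ->
  ln (prodR f n) = sumR (fun j => ln (f j)) n.
Proof.
  induction n; intros H; simpl. apply ln_1.
  rewrite ln_mult. rewrite IHn by (intros; apply H; lia). reflexivity.
  apply prodR_pos; intros; apply H; lia. apply H; lia.
Qed.

Lemma sumR_shift f n : sumR f (S n) = f O + sumR (fun j => f (S j)) n.
Proof. induction n; simpl in *. ring. rewrite IHn. ring. Qed.

Lemma sumR_ext f g n : (forall j, (j < n)%nat -> f j = g j) -> sumR f n = sumR g n.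
Proof.
  induction n; intros H; simpl; auto. rewrite IHn by (intros; apply H; lia). rewrite H by lia; auto.
Qed.

Lemma one_minus_q u m :
  1 - exp (- PI * exp u) ^ m = 1 - exp (- PI * INR m * exp u).
Proof. rewrite exp_pow_INR. f_equal. f_equal. ring. Qed.

Definition Kf (N : nat) (u : R) :=
  sumR (fun j => ell (2 * S j) u) (S N) + 2 * sumR (fun j => ell (2 * j + 3) u) N.

Lemma ln_Gf u N : ln (Gf (exp (- PI * exp u)) (S N)) = Kf N u + 2 * ell 1 u.
Proof.
  set (q := exp (- PI * exp u)).
  assert (Hq : 0 < q < 1) by (split; [apply exp_pos| apply qlt1, exp_pos]).
  assert (P1 : 0 < poch q (S N)) by (apply poch_pos; lra).
  assert (P2 : 0 < Oprod q (S N)) by (apply prodR_pos; intros; apply fac_pos; lra || lia).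
  unfold Gf. rewrite !ln_mult by (first [assumption | apply Rmult_lt_0_compat; assumption]).
  unfold poch, Oprod. rewrite !ln_prod.
  2,3: intros; apply fac_pos; lra || lia.
  assert (E1 : sumR (fun j => ln (1 - q ^ (2 * S j))) (S N) = sumR (fun j => ell (2 * S j) u) (S N)).
  { apply sumR_ext; intros. unfold ell, q. rewrite one_minus_q. reflexivity. }
  assert (E2 : sumR (fun j => ln (1 - q ^ (2 * j + 1))) (S N) = ell 1 u + sumR (fun j => ell (2 * j + 3) u) N).
  { rewrite sumR_shift. f_equal. unfold ell, q. rewrite one_minus_q. reflexivity.
    apply sumR_ext; intros. unfold ell, q. rewrite one_minus_q. replace (2 * S j + 1)%nat with (2 * j + 3)%nat by lia. reflexivity. }
  rewrite E1, E2. unfold Kf. ring.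
Qed.

Lemma Kf_concave N : concave3 (Kf N).
Proof.
  unfold Kf.
  apply (concave3_plus (fun u => sumR (fun j => ell (2 * S j) u) (S N))
                       (fun u => 2 * sumR (fun j => ell (2 * j + 3) u) N)).
  - apply (concave3_sum (fun j => ell (2 * S j))). intros; apply ell_concave; lia.
  - apply (concave3_scal 2 (fun u => sumR (fun j => ell (2 * j + 3) u) N)). lra.
    apply (concave3_sum (fun j => ell (2 * j + 3))). intros; apply ell_concave; lia.
Qed.

Definition Kl (u : R) := ln (theta4 (exp u)) - 2 * ell 1 u.

Lemma Kf_cv u : Un_cv (fun N => Kf N u) (Kl u).
Proof.
  assert (Hs : 0 < exp u) by apply exp_pos.
  pose proof (G_cv _ Hs) as Hg. pose proof (theta4_pos _ Hs) as Hp.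
  assert (Hl : Un_cv (fun N => ln (Gf (exp (- PI * exp u)) (S N))) (ln (theta4 (exp u)))).
  { apply (continuity_seq ln); auto. apply derivable_continuous_pt.
    exists (/ theta4 (exp u)). apply derivable_pt_lim_ln. auto. }
  assert (H2 := CV_minus _ _ _ _ Hl (cv_const (2 * ell 1 u))).
  intros e He. destruct (H2 e He) as [N HN]. exists N. intros n Hn.
  specialize (HN n Hn). simpl in HN. rewrite ln_Gf in HN. unfold Kl.
  replace (Kf n u) with (Kf n u + 2 * ell 1 u - 2 * ell 1 u) by ring. exact HN.
Qed.

Lemma Kl_concave : concave3 Kl.
Proof. apply (concave3_lim Kf). apply Kf_cv. apply Kf_concave. Qed.

Lemma h_deriv u : derivable_pt_lim (fun u => ln (theta4 (exp u))) u
   (/ theta4 (exp u) * (theta4d (exp u) * exp u)).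
Proof.
  assert (Hs : 0 < exp u) by apply exp_pos.
  assert (D1 : derivable_pt_lim (comp theta4 exp) u (theta4d (exp u) * exp u)).
  { apply derivable_pt_lim_comp. apply derivable_pt_lim_exp. apply theta4_deriv; auto. }
  exact (derivable_pt_lim_comp _ ln _ _ _ D1 (derivable_pt_lim_ln _ (theta4_pos _ Hs))).
Qed.

Lemma Kl_deriv u : derivable_pt_lim Kl u
   (/ theta4 (exp u) * (theta4d (exp u) * exp u) - 2 * dell 1 u).
Proof.
  exact (derivable_pt_lim_minus _ (mult_real_fct 2 (ell 1)) _ _ _ (h_deriv u)
           (derivable_pt_lim_scal _ 2 _ _ (ell_deriv 1 u ltac:(lia)))).
Qed.

Theorem mainTheorem12 :
  exists theta4' : R -> R,
    (forall s, 0 < s -> derivable_pt_lim theta4 s (theta4' s)) /\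
    (forall s t, 0 < s -> s < t ->
       t * (theta4' t / theta4 t) < s * (theta4' s / theta4 s)).
Proof.
  exists theta4d. split.
  - apply theta4_deriv.
  - intros s t Hs Hst.
    assert (Ht : 0 < t) by lra.
    assert (Hu : ln s < ln t) by (apply ln_increasing; auto).
    pose proof (concave_deriv Kl _ _ _ _ Kl_concave (Kl_deriv (ln s)) (Kl_deriv (ln t)) Hu) as C.
    pose proof (dell_decr 1 _ _ ltac:(lia) Hu) as Dd.
    rewrite !exp_ln in C by auto.
    pose proof (theta4_pos s Hs). pose proof (theta4_pos t Ht).
    replace (t * (theta4d t / theta4 t)) with (/ theta4 t * (theta4d t * t)) by (field; lra).
    replace (s * (theta4d s / theta4 s)) with (/ theta4 s * (theta4d s * s)) by (field; lra).
    lra.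
Qed.
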